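(* Let $\Omega$ be a Polish space admitting a nonzero atomless finite positive Borel measure (e.g. $\Omega=\mathbb{R}$). Then $\mathscr{L}(\mathscr{M}(\Omega),\sigma)$ is not an ideal of $\mathscr{L}(\mathscr{M}(\Omega))$: for every positive measure $\mu\ne0$ there is an operator $T\in\mathscr{L}(\mathscr{M}(\Omega))$ with $0\le T\le \mathbb{1}\otimes\mu$ (where $(\mathbb{1}\otimes\mu)\nu=\nu(\Omega)\mu$ is weakly continuous) such that $T$ is not weakly continuous.
   Context: $\mathscr{M}(\Omega)$ is the Banach lattice of finite signed Borel measures; $\mathscr{L}(\mathscr{M}(\Omega))$ the bounded operators on it with the order $S\le T$ iff $S\mu\le T\mu$ for positive $\mu$. An operator is weakly continuous if $(T\nu)(A)=\int k(x,A)\,d\nu(x)$ for a bounded transition kernel $k$ (a map $\Omega\times\mathscr{B}(\Omega)\to\mathbb{R}$, signed measure in the second variable, measurable in the first, with $\sup_x\lvert k\rvert(x,\Omega)<\infty$); equivalently, its norm adjoint leaves the space $B_b(\Omega)$ of bounded Borel functions invariant. $\mathscr{L}(\mathscr{M}(\Omega),\sigma)$ is the space of weakly continuous operators. *)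

(* Defs.v *)
From HB Require Import structures.
From mathcomp Require Import all_boot all_order all_algebra.
From mathcomp Require Import all_classical all_reals all_analysis.
Set Implicit Arguments. Unset Strict Implicit. Unset Printing Implicit Defensive.
Import Order.TTheory GRing.Theory Num.Theory.
Import numFieldNormedType.Exports.
Local Open Scope classical_set_scope.
Local Open Scope ring_scope.

Definition polish (R : realType) (X : topologicalType) : Prop :=
  (exists D : set X, countable D /\ closure D = setT) /\
  exists dist : X -> X -> R,
    (forall x y, 0 <= dist x y) /\
    (forall x y, dist x y = 0 <-> x = y) /\
    (forall x y, dist x y = dist y x) /\
    (forall x y z, dist x z <= dist x y + dist y z) /\
    (forall A : set X, open A <->
        (forall x, A x -> exists2 e : R, 0 < e & [set y | dist x y < e] `<=` A)) /\
    (forall u : nat -> X,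
        (forall e : R, 0 < e -> exists N : nat, forall m n : nat,
            (N <= m)%N -> (N <= n)%N -> dist (u m) (u n) < e) ->
        exists x : X, (fun n => dist (u n) x) @ \oo --> 0).

Definition Borel (X : ptopologicalType) := g_sigma_algebraType (@open X).

Section SignedMeasures.
Context {d : measure_display} {T : measurableType d} {R : realType}.

(** Finite signed (real-valued, countably additive) measures on T.
    Convention: a signed measure is represented by a function on all sets
    that vanishes on non-measurable sets. *)
Definition smeasure (m : set T -> R) : Prop :=
  (forall A, ~ measurable A -> m A = 0) /\
  (forall F : (set T)^nat, (forall n, measurable (F n)) -> trivIset setT F ->
     (fun n => \sum_(0 <= i < n) m (F i)) @ \oo --> m (\bigcup_n F n)).

Definition spositive (m : set T -> R) : Prop :=
  forall A, measurable A -> 0 <= m A.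

Definition atomless (m : set T -> R) : Prop :=
  forall A, measurable A -> 0 < m A ->
    exists B, [/\ measurable B, B `<=` A, 0 < m B & m B < m A].

Definition tvnorm (m : set T -> R) : \bar R :=
  ereal_sup [set x : \bar R | exists n (F : 'I_n -> set T),
     [/\ forall i, measurable (F i),
         forall i j, i != j -> F i `&` F j = set0 &
         x = (\sum_(i < n) `|m (F i)|)%:E]].

(** Bounded (linear) operators on M(T). Values on non-signed-measures are
    irrelevant. *)
Definition bounded_op (Op : (set T -> R) -> (set T -> R)) : Prop :=
  [/\ forall m, smeasure m -> smeasure (Op m),
      forall (a : R) m n, smeasure m -> smeasure n ->
        Op (fun A => a * m A + n A) = (fun A => a * Op m A + Op n A) &
      exists C : R, forall m, smeasure m -> (tvnorm (Op m) <= C%:E * tvnorm m)%E].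

Definition op_le (S Op : (set T -> R) -> (set T -> R)) : Prop :=
  forall nu, smeasure nu -> spositive nu ->
    forall A, measurable A -> S nu A <= Op nu A.

Definition zero_op : (set T -> R) -> (set T -> R) := fun _ _ => 0.

Definition one_tensor (mu : set T -> R) : (set T -> R) -> (set T -> R) :=
  fun nu A => nu setT * mu A.

(** Weak continuity: given by a bounded transition kernel k,
    (Op nu)(A) = ∫ k(x,A) dnu(x).  The integral against the signed measure nu
    is computed through any decomposition nu = P - N with P, N finite
    positive measures. *)
Definition weakly_continuous (Op : (set T -> R) -> (set T -> R)) : Prop :=
  exists k : T -> set T -> R,
    [/\ forall x, smeasure (k x),
        forall A, measurable A -> measurable_fun setT (fun x => k x A),
        exists C : R, forall x, (tvnorm (k x) <= C%:E)%E &
        forall nu, smeasure nu ->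
          forall P N : {finite_measure set T -> \bar R},
            (forall A, measurable A -> nu A = fine (P A) - fine (N A)) ->
            forall A, measurable A ->
              Op nu A = Rintegral P setT (fun x => k x A)
                        - Rintegral N setT (fun x => k x A)].

End SignedMeasures.

(* Main.v *)
Require Import Defs.
From HB Require Import structures.
From mathcomp Require Import all_boot all_order all_algebra.
From mathcomp Require Import all_classical all_reals all_analysis.
From mathcomp Require Import lra ring.
Import Order.TTheory GRing.Theory Num.Theory.
Import numFieldNormedType.Exports.
Local Open Scope classical_set_scope.
Local Open Scope ring_scope.
Set Implicit Arguments. Unset Strict Implicit. Unset Printing Implicit Defensive.

Section Gen.
Context {d : measure_display} {T : measurableType d} {R : realType}.
Implicit Types m nu : set T -> R.

Lemma sm0 m : smeasure m -> m set0 = 0.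
Proof.
move=> [_ hm].
have := hm (fun _ => set0) (fun _ => measurable0) (@trivIset_set0 _ _ setT).
rewrite bigcup0 // => h.
set u := (fun n : nat => \sum_(0 <= i < n) m set0) in h.
have hd : (fun n => u n.+1 - u n) @ \oo --> m set0 - m set0.
  apply: cvgB => //; by rewrite (cvg_shiftS u).
have : (fun n => u n.+1 - u n) = fun=> m set0.
  apply/funext => n; rewrite /u big_nat_recr //=; lra.
move=> e; rewrite e subrr in hd.
have hc : (fun=> m set0) @ (\oo : set_system nat) --> m set0 by exact: cvg_cst.
exact: (cvg_unique _ hc hd).
Qed.

Lemma sm_sigma m : smeasure m -> semi_sigma_additive (fun A => (m A)%:E).
Proof.
move=> [_ hm] F mF tF _.
apply: cvg_EFin; first by apply: nearW => n; rewrite sumEFin.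
have -> : (fine \o (fun n => \sum_(0 <= i < n) (m (F i))%:E)) =
          (fun n => \sum_(0 <= i < n) m (F i)).
  by apply/funext => n /=; rewrite sumEFin.
exact: hm.
Qed.

End Gen.

Section ChargeOf.
Context {d : measure_display} {T : measurableType d} {R : realType}.
Variables (m : set T -> R) (hm : smeasure m).

Definition chargeOf (_ : smeasure m) : set T -> \bar R := fun A => (m A)%:E.

Let c0 : chargeOf hm set0 = 0%E.
Proof. by rewrite /chargeOf sm0. Qed.
Let cfin : forall x, measurable x -> chargeOf hm x \is a fin_num.
Proof. by []. Qed.
Let csig : semi_sigma_additive (chargeOf hm).
Proof. exact: sm_sigma. Qed.

HB.instance Definition _ := isCharge.Build _ _ _ (chargeOf hm) c0 cfin csig.

End ChargeOf.

Section MeasOf.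
Context {d : measure_display} {T : measurableType d} {R : realType}.
Variables (m : set T -> R) (hm : smeasure m) (hp : spositive m).

Let pos : forall E, (0 <= chargeOf hm E)%E.
Proof.
move=> E; rewrite /chargeOf lee_fin.
have [mE|nE] := pselect (measurable E); first exact: hp.
by rewrite (proj1 hm).
Qed.

Definition measOf := measure_of_charge _ pos.

HB.instance Definition _ := Measure.on measOf.

Let finm : fin_num_fun measOf.
Proof. by move=> U mU; rewrite fin_num_measure. Qed.

HB.instance Definition _ := @Measure_isFinite.Build _ _ _ measOf finm.

Lemma measOfE A : measOf A = (m A)%:E.
Proof. by []. Qed.

End MeasOf.


Section FromM.
Context {d : measure_display} {T : measurableType d} {R : realType}.

Definition fromM (P : {finite_measure set T -> \bar R}) : set T -> R :=
  fun A => if pselect (measurable A) then fine (P A) else 0.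

Lemma fromME P A : measurable A -> fromM P A = fine (P A).
Proof. by move=> mA; rewrite /fromM; case: pselect. Qed.

Lemma fromM_sm P : smeasure (fromM P).
Proof.
split; first by move=> A nA; rewrite /fromM; case: pselect.
move=> F mF tF.
have mU : measurable (\bigcup_n F n) by exact: bigcupT_measurable.
have h0 := @measure_semi_sigma_additive _ _ _ P F mF tF mU.
have fU : P (\bigcup_n F n) \is a fin_num by rewrite fin_num_measure.
have h1 : (fun n => \sum_(0 <= i < n) P (F i))%E @ \oo --> (fine (P (\bigcup_n F n)))%:E.
  by rewrite fineK.
have [_ h] := (fine_cvgP _ _).1 h1.
rewrite fromME //.
suff -> : (fun n => \sum_(0 <= i < n) fromM P (F i)) =
   (fine \o (fun n => \sum_(0 <= i < n) P (F i))%E) by exact: h.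
apply/funext => n /=.
rewrite (_ : (\sum_(0 <= i < n) (P (F i)) = \sum_(0 <= i < n) (fine (P (F i)))%:E)%E).
  by rewrite sumEFin /=; apply: eq_bigr => i _; rewrite fromME.
apply: eq_bigr => i _; rewrite fineK // fin_num_measure //.
Qed.


End FromM.

Section Sig.
Context {T : choiceType} {R : realType}.
Local Open Scope ereal_scope.

Definition pp (x : R) : R := if (0 <= x)%R then x else 0%R.

Lemma pp_ge0 x : (0 <= pp x)%R.
Proof. by rewrite /pp; case: ifP => // /negbT; rewrite -ltNge => /ltW. Qed.

Lemma ppE_ge0 x : 0 <= (pp x)%:E.
Proof. by rewrite lee_fin pp_ge0. Qed.

Lemma ppB x : (pp x - pp (- x) = x)%R.
Proof.
rewrite /pp; case: ifP => h; case: ifP => h'; move: h h' => /idP h /idP h'.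
- have : x = 0%R by apply/eqP; rewrite eq_le h andbT -oppr_ge0 h'.
  by move=> ->; rewrite oppr0 subr0.
- by rewrite subr0.
- by rewrite sub0r opprK.
- exfalso; move: h'; rewrite oppr_ge0 => h'.
  by case/orP: (le_total 0%R x).
Qed.

Lemma ppZ c x : (0 <= c)%R -> pp (c * x) = (c * pp x)%R.
Proof.
move=> c0; rewrite /pp; have [h|h] := leP 0%R x.
  by rewrite ifT ?mulr_ge0.
have [->|cp] := eqVneq c 0%R; first by rewrite !mul0r; case: ifP.
rewrite ifF ?mulr0 //; apply/negbTE; rewrite -ltNge.
by rewrite pmulr_rlt0 // lt_neqAle eq_sym cp c0.
Qed.

Definition Epos (f : T -> R) := \esum_(x in [set: T]) (pp (f x))%:E.

Definition Sig (f : T -> R) : R :=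
  (fine (Epos f) - fine (Epos (fun x => (- f x)%R)))%R.

Definition summ (f : T -> R) :=
  Epos f \is a fin_num /\ Epos (fun x => (- f x)%R) \is a fin_num.

Lemma Epos_ge0 f : 0 <= Epos f.
Proof. by apply: esum_ge0 => x _; exact: ppE_ge0. Qed.

Lemma esumZ (r : R) (g : T -> R) : (0 <= r)%R ->
  \esum_(x in [set: T]) (r * g x)%:E = r%:E * \esum_(x in [set: T]) (g x)%:E.
Proof.
move=> r0; rewrite /esum -ereal_supZl //; last first.
  apply/set0P; exists 0; exists set0; first exact: fsets_set0.
  by rewrite fsbig_set0.
rewrite image_comp; congr ereal_sup; apply: eq_imagel => A [fA _] /=.
by rewrite !fsumEFin // -EFinM mulr_fsumr.
Qed.

Lemma fin_le (x y : \bar R) : 0 <= x -> x <= y -> y \is a fin_num -> x \is a fin_num.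
Proof.
move=> x0 xy fy; rewrite ge0_fin_numE //; apply: le_lt_trans xy _.
by rewrite ltey_eq fy.
Qed.

Lemma SigD f g : summ f -> summ g ->
  summ (fun x => f x + g x)%R /\ Sig (fun x => f x + g x)%R = (Sig f + Sig g)%R.
Proof.
move=> [fA fB] [fC fD].
set A := Epos f in fA *; set B := Epos (fun x => (- f x)%R) in fB *.
set C := Epos g in fC *; set D := Epos (fun x => (- g x)%R) in fD *.
set E := Epos (fun x => f x + g x)%R; set G := Epos (fun x => (- (f x + g x))%R).
have fE : E \is a fin_num.
  apply: (fin_le (Epos_ge0 _) (y := A + C)); last by rewrite fin_numD fA fC.
  rewrite /A /C /Epos -esumD; try by move=> *; exact: ppE_ge0.
  apply: le_esum => x _; rewrite -EFinD lee_fin /pp.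
  case: ifP => h1; case: ifP => h2; case: ifP => h3 //;
    move: h1 h2 h3 => /idP h1 /idP h2 /idP h3; rewrite ?addr0 ?add0r;
    try (apply: lerD => //); try lra.
have fG : G \is a fin_num.
  apply: (fin_le (Epos_ge0 _) (y := B + D)); last by rewrite fin_numD fB fD.
  rewrite /B /D /Epos -esumD; try by move=> *; exact: ppE_ge0.
  apply: le_esum => x _; rewrite -EFinD lee_fin /pp.
  case: ifP => h1; case: ifP => h2; case: ifP => h3 //;
    move: h1 h2 h3 => /idP h1 /idP h2 /idP h3; rewrite ?addr0 ?add0r; lra.
split; first by split.
have heq : E + B + D = G + A + C.
  rewrite /E /B /D /G /A /C /Epos -!esumD;
    try by move=> *; (exact: ppE_ge0 || (apply: adde_ge0; exact: ppE_ge0)).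
  apply: eq_esum => x _; rewrite -!EFinD; congr EFin.
  have := ppB (f x + g x); have := ppB (f x); have := ppB (g x).
  rewrite opprD; lra.
move: heq; rewrite -(fineK fE) -(fineK fG) -(fineK fA) -(fineK fB) -(fineK fC) -(fineK fD).
rewrite -!EFinD => -[] h.
rewrite /Sig -/A -/B -/C -/D -/E -/G; lra.
Qed.
Lemma EposZ c f : (0 <= c)%R -> Epos (fun x => c * f x)%R = c%:E * Epos f.
Proof.
move=> c0; rewrite /Epos -esumZ //; apply: eq_esum => x _; by rewrite ppZ.
Qed.

Lemma SigZ c f : summ f ->
  summ (fun x => c * f x)%R /\ Sig (fun x => c * f x)%R = (c * Sig f)%R.
Proof.
move=> [fA fB]; rewrite /summ /Sig.
have [c0|c0] := leP 0%R c.
  rewrite EposZ //.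
  have -> : (fun x => (- (c * f x))%R) = (fun x => c * (- f x))%R.
    by apply/funext => x; rewrite mulrN.
  rewrite EposZ //.
  move: fA fB; set A := Epos f; set B := Epos _ => fA fB.
  rewrite -(fineK fA) -(fineK fB) -!EFinM /=; split => //; ring.
have c0' : (0 <= - c)%R by rewrite oppr_ge0 ltW.
have -> : (fun x => c * f x)%R = (fun x => (- c) * (- f x))%R.
  by apply/funext => x; rewrite mulrNN.
have -> : (fun x => (- (c * f x)))%R = (fun x => (- c) * f x)%R.
  by apply/funext => x; rewrite mulNr.
rewrite !EposZ //.
move: fA fB; set A := Epos f; set B := Epos _ => fA fB.
rewrite -(fineK fA) -(fineK fB) -!EFinM /=; split => //; ring.
Qed.

End Sig.

Section Atoms.
Context {d : measure_display} {T : measurableType d} {R : realType}.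
Hypothesis msing : forall x : T, measurable [set x].
Local Open Scope ereal_scope.

Lemma esum_le_meas (mu' : {measure set T -> \bar R}) (D : set T) : measurable D ->
  \esum_(x in D) mu' [set x] <= mu' D.
Proof.
move=> mD; apply: ge_ereal_sup => _ [A [fA AD] <-].
rewrite -measure_fin_bigcup //.
- apply: le_measure; rewrite ?inE //.
  + by apply: fin_bigcup_measurable.
  + by move=> z [x Ax /= ->]; exact: AD.
- by move=> i j _ _ [z [/= -> ->]].
Qed.

Lemma hahn_bound (nu : set T -> R) (hnu : smeasure nu) : exists P N : set T,
  [/\ measurable P, measurable N, P `&` N = set0, P `|` N = setT &
     [/\ Epos (fun x => nu [set x]) <= (nu P)%:E,
        Epos (fun x => (- nu [set x])%R) <= (- nu N)%:E,
        (0 <= nu P)%R, (nu N <= 0)%R & nu setT = (nu P + nu N)%R]].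
Proof.
have [P [N hPN]] := Hahn_decomposition (chargeOf hnu).
have [[mP posP] [mN negP] PNT PN0] := hPN.
exists P, N; split => //; split.
- have jT : jordan_pos hPN setT = (nu P)%:E.
    by rewrite jordan_posE cjordan_posE /crestr0 ifT ?inE // /crestr setTI.
  rewrite -jT; apply: (le_trans _ (esum_le_meas (jordan_pos hPN) measurableT)).
  rewrite /Epos le_eqVlt; apply/orP; left; apply/eqP; apply: eq_esum => x _.
  rewrite /jordan_pos /measure_of_charge /=.
  rewrite jordan_posE cjordan_posE /crestr0 ifT ?inE // /crestr /chargeOf /pp.
  have [xP|xP] := pselect (P x).
    have -> : [set x] `&` P = [set x] by apply/seteqP; split => y //=; [case | move=> ->].
    have := posP [set x] (msing x); rewrite /chargeOf lee_fin => ->; first by [].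
    by move=> y ->.
  have -> : [set x] `&` P = set0 by apply/seteqP; split => y //= [-> ].
  rewrite charge0; case: ifP => // h; congr EFin.
  have xN : N x by have : [set: T] x by []; rewrite -PNT => -[].
  have := negP [set x] (msing x); rewrite /chargeOf lee_fin => /(_ _)/= h'.
  by apply/eqP; rewrite eq_le h h' // => y ->.
- have jT : jordan_neg hPN setT = (- nu N)%:E.
    rewrite jordan_negE cjordan_negE.
    by rewrite /crestr0 ifT ?inE // /crestr setTI.
  rewrite -jT; apply: (le_trans _ (esum_le_meas (jordan_neg hPN) measurableT)).
  rewrite /Epos le_eqVlt; apply/orP; left; apply/eqP; apply: eq_esum => x _.
  rewrite /jordan_neg /measure_of_charge /=.
  rewrite jordan_negE cjordan_negE /crestr0 ifT ?inE // /crestr /pp.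
  have [xN|xN] := pselect (N x).
    have -> : [set x] `&` N = [set x] by apply/seteqP; split => y //=; [case | move=> ->].
    have := negP [set x] (msing x); rewrite /chargeOf lee_fin => h.
    by rewrite ifT ?oppr_ge0 ?h //; move=> y ->.
  have -> : [set x] `&` N = set0 by apply/seteqP; split => y //= [-> ].
  rewrite charge0 oppe0; case: ifP => // h; congr EFin.
  have xP : P x by have : [set: T] x by []; rewrite -PNT => -[].
  have := posP [set x] (msing x); rewrite /chargeOf lee_fin => /(_ _)/= h'.
  by apply/eqP; rewrite eq_le h andbT oppr_le0 h' // => y ->.
- by have := posP P mP (@subset_refl _ _); rewrite /chargeOf lee_fin.
- by rewrite -lee_fin; exact: (negP N mN (@subset_refl _ _)).
- have := charge_partition (chargeOf hnu) measurableT mP mN PNT PN0.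
  by rewrite /chargeOf !setTI => -[].
Qed.

Definition Sa (nu : set T -> R) : R := Sig (fun x => nu [set x]).

Lemma summ_sm (nu : set T -> R) : smeasure nu -> summ (fun x => nu [set x]).
Proof.
move=> hnu; have [P [N [_ _ _ _ [h1 h2 _ _ _]]]] := hahn_bound hnu.
split; [exact: (fin_le (Epos_ge0 _) h1) | exact: (fin_le (Epos_ge0 _) h2)].
Qed.

Lemma Sa_bound (nu : set T -> R) : smeasure nu -> exists P N : set T,
  [/\ measurable P, measurable N, P `&` N = set0,
      (`|Sa nu| <= `|nu P| + `|nu N|)%R & (`|nu setT| <= `|nu P| + `|nu N|)%R].
Proof.
move=> hnu; have [P [N [mP mN PN0 _ [h1 h2 p0 n0 hT]]]] := hahn_bound hnu.
exists P, N; split => //; last by rewrite hT ler_normD.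
have [f1 f2] := summ_sm hnu.
rewrite /Sa /Sig.
have g1 : (0 <= fine (Epos (fun x => nu [set x])) <= nu P)%R.
  by rewrite fine_ge0 ?Epos_ge0 //= -lee_fin fineK.
have g2 : (0 <= fine (Epos (fun x => (- nu [set x])%R)) <= - nu N)%R.
  by rewrite fine_ge0 ?Epos_ge0 //= -lee_fin fineK.
rewrite (ger0_norm p0) (ler0_norm n0).
move: g1 g2 => /andP[g1 g1'] /andP[g2 g2'].
rewrite ler_norml; apply/andP; split; lra.
Qed.

Lemma Sa_pos (nu : set T -> R) : smeasure nu -> spositive nu -> (0 <= Sa nu <= nu setT)%R.
Proof.
move=> hnu pnu; have [P [N [mP mN PN0 _ [h1 h2 p0 n0 hT]]]] := hahn_bound hnu.
have [f1 f2] := summ_sm hnu.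
have nN : nu N = 0%R by apply/eqP; rewrite eq_le n0 pnu.
have e2 : fine (Epos (fun x => (- nu [set x])%R)) = 0%R.
  apply/eqP; rewrite eq_le fine_ge0 ?Epos_ge0 // andbT -lee_fin fineK //.
  by rewrite nN oppr0 in h2.
rewrite /Sa /Sig e2 subr0 fine_ge0 ?Epos_ge0 //= hT nN addr0 -lee_fin fineK //.
Qed.

Lemma Sa_lin (a : R) (m n : set T -> R) : smeasure m -> smeasure n ->
  Sa (fun A => a * m A + n A)%R = (a * Sa m + Sa n)%R.
Proof.
move=> hm hn; rewrite /Sa.
have [s1 e1] := SigZ a (summ_sm hm).
by have [_ ->] := SigD s1 (summ_sm hn); rewrite e1.
Qed.

End Atoms.

Section TV.
Context {d : measure_display} {T : measurableType d} {R : realType}.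
Local Open Scope ereal_scope.

Lemma tv_ge (nu : set T -> R) P N : measurable P -> measurable N -> P `&` N = set0 ->
  (`|nu P| + `|nu N|)%:E <= tvnorm nu.
Proof.
move=> mP mN PN; apply: ereal_sup_ubound.
exists 2%N, (fun i : 'I_2 => if i == ord0 then P else N); split.
- by move=> i; case: ifP.
- case=> [[|[|?]] ?] [[|[|?]] ?] //= _; by rewrite // setIC.
- by rewrite !big_ord_recr big_ord0 /= add0r.
Qed.

Lemma tv_pos (mu : set T -> R) (hmu : smeasure mu) (hp : spositive mu) (c : R) :
  tvnorm (fun A => c * mu A)%R <= (`|c| * mu setT)%:E.
Proof.
apply: ge_ereal_sup => _ [n [F [mF dF ->]]]; rewrite lee_fin.
have -> : (\sum_(i < n) `|c * mu (F i)| = `|c| * \sum_(i < n) mu (F i))%R.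
  by rewrite mulr_sumr; apply: eq_bigr => i _; rewrite normrM (ger0_norm (hp _ (mF i))).
apply: ler_wpM2l => //.
rewrite -lee_fin -sumEFin.
have -> : \sum_(i < n) (mu (F i))%:E = \sum_(i < n) measOf hmu hp (F i) by [].
have tF : trivIset setT F.
  move=> i j _ _ [z [Fi Fj]]; apply/eqP; apply/negPn/negP => ij.
  have := dF i j ij => /seteqP[h _]; exact: (h z (conj Fi Fj)).
rewrite -measure_semi_additive_ord //; last exact: bigsetU_measurable.
have -> : (mu setT)%:E = measOf hmu hp setT by [].
by apply: le_measure; rewrite ?inE //; exact: bigsetU_measurable.
Qed.

End TV.

Lemma borel_sing (R : realType) (X : ptopologicalType) : polish R X ->
  forall x : Borel X, measurable [set x].
Proof.
move=> [_ [dist [d0 [dE [dS [_ [dOpen _]]]]]]] x.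
have o : open (~` [set x] : set X).
  apply/dOpen => y /= ny; exists (dist y x).
    rewrite lt_neqAle d0 andbT eq_sym; apply/negP => /eqP /dE; exact: ny.
  move=> z /= hz zx; move: hz; rewrite zx ltxx //.
rewrite -(setCK [set x]); apply: measurableC.
exact: sub_sigma_algebra.
Qed.

Unset Implicit Arguments.

Theorem mainTheorem6 (R : realType) (X : ptopologicalType) :
  polish R X ->
  (exists m : set (Borel X) -> R,
      [/\ smeasure m, spositive m, m setT <> 0 & atomless m]) ->
  forall mu : set (Borel X) -> R,
    smeasure mu -> spositive mu -> mu <> (fun _ => 0) ->
    weakly_continuous (one_tensor mu) /\
    exists Op : (set (Borel X) -> R) -> (set (Borel X) -> R),
      [/\ bounded_op Op, op_le zero_op Op, op_le Op (one_tensor mu)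
        & ~ weakly_continuous Op].
Proof.
move=> hpol [m [hm hmp hm0 hma]] mu hmu hmup hmu0.
have msing := borel_sing hpol.
split.
  exists (fun _ => mu); split.
  - by move=> _.
  - by move=> A mA; exact: measurable_cst.
  - exists (mu setT) => x.
    have := tv_pos hmu hmup 1; rewrite normr1 mul1r.
    by rewrite (_ : (fun A => 1 * mu A) = mu) //; apply/funext => A; rewrite mul1r.
  - move=> nu hnu P N hPN A mA.
    rewrite /one_tensor hPN // !Rintegral_cst //; ring.
pose F (nu : set (Borel X) -> R) := nu setT - Sa nu.
exists (fun nu A => F nu * mu A); split.
- split.
  + move=> nu hnu; split.
      by move=> A nA; rewrite (proj1 hmu A nA) mulr0.
    move=> G mG tG.
    have h := (proj2 hmu) G mG tG.
    suff -> : (fun n => \sum_(0 <= i < n) (F nu * mu (G i))) =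
              (fun n => F nu * \sum_(0 <= i < n) mu (G i)) by apply: cvgMr.
    by apply/funext => n; rewrite mulr_sumr.
  + move=> a m1 n1 h1 h2; apply/funext => A.
    rewrite /F (Sa_lin msing) //; ring.
  + exists (2 * mu setT) => nu hnu.
    have [P [N [mP mN PN hS hT]]] := Sa_bound msing hnu.
    apply: le_trans (tv_pos hmu hmup (F nu)) _.
    apply: le_trans (lee_wpmul2l _ (tv_ge nu mP mN PN)).
      rewrite -EFinM lee_fin.
      have hF : `|F nu| <= 2 * (`|nu P| + `|nu N|).
        by rewrite /F; apply: le_trans (ler_normB _ _) _; lra.
      have := hmup _ measurableT => h.
      nra.
    by rewrite lee_fin; have := hmup _ measurableT; lra.
- move=> nu hnu pnu A mA; rewrite /zero_op.
  apply: mulr_ge0; last exact: hmup.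
  have := Sa_pos msing hnu pnu; rewrite /F; lra.
- move=> nu hnu pnu A mA; rewrite /one_tensor.
  have := Sa_pos msing hnu pnu; have := hmup A mA; rewrite /F; nra.
move=> [k [hk kmeas [C hC] hrep]].
have k0 : forall x A, measurable A -> k x A = 0.
  move=> x A mA.
  pose dx := fromM (\d_x : {finite_measure set (Borel X) -> \bar R}).
  have hdx : smeasure dx by exact: fromM_sm.
  have := hrep dx hdx \d_x mzero _ A mA.
  rewrite /Rintegral integral_measure_zero integral_dirac //; last first.
    apply/(measurable_realfun.measurable_EFinP setT (fun y => k y A)); exact: kmeas.
  have hdec : forall B, measurable B -> dx B = fine (\d_x B) - fine (@mzero _ _ R B).
    by move=> B mB; rewrite /dx fromME // subr0.
  move=> /(_ hdec); rewrite diracT mul1e /= subr0 => <-.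
  suff -> : F dx = 0 by rewrite mul0r.
  have hv : forall y, dx [set y] = (x \in [set y])%:R.
    by move=> y; rewrite /dx fromME.
  have pdx : spositive dx.
    by move=> B mB; rewrite /dx fromME // fine_ge0 // measure_ge0.
  have dxT : dx setT = 1.
    by rewrite /dx fromME //= indicE in_setT.
  have /andP[s1 s2] := Sa_pos msing hdx pdx.
  have [f1 f2] := summ_sm msing hdx.
  have eneg : Epos (fun y => - dx [set y]) = 0%E.
    apply: esum1 => y _; congr EFin; rewrite /pp; case: ifP => // h.
    by have := pdx _ (msing y); move: h; lra.
  have epos : (1 <= Epos (fun y => dx [set y]))%E.
    apply: ereal_sup_ubound; exists [set x]; first by split => //; exact: finite_set1.
    rewrite fsbig_set1 hv /pp.
    by rewrite (_ : x \in [set x]) ?mem_set // ler01.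
  have : 1 <= fine (Epos (fun y => dx [set y])).
    by rewrite -lee_fin fineK.
  move: s2; rewrite /F dxT /Sa /Sig eneg /=; lra.
have [A muA] : exists A, mu A <> 0.
  apply: contrapT => h; apply: hmu0; apply/funext => A.
  by apply: contrapT => h'; apply: h; exists A.
have mA : measurable A.
  by apply: contrapT => nA; apply: muA; exact: (proj1 hmu A nA).
have hdec : forall B, measurable B ->
    m B = fine (measOf hm hmp B) - fine (@mzero _ _ R B).
  by move=> B mB; rewrite measOfE /= subr0.
have := hrep m hm (measOf hm hmp) mzero hdec A mA.
have -> : (fun x => k x A) = (fun=> 0) by apply/funext => x; rewrite k0.
rewrite !Rintegral_cst // !mul0r subr0.
have ms0 : forall x, m [set x] = 0.
  move=> x; apply/eqP; rewrite eq_le hmp // andbT; apply/negP => /negP.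
  rewrite -ltNge => hx.
  have [B [mB Bx B0 Bl]] := hma _ (msing x) hx.
  case: (subset_set1 Bx) => eB; move: B0 Bl; rewrite eB.
    by rewrite (sm0 hm) ltxx.
  by rewrite ltxx.
have Sm : Sa m = 0.
  rewrite /Sa /Sig.
  have e1 : Epos (fun y => m [set y]) = 0%E.
    by apply: esum1 => y _; rewrite ms0 /pp lexx.
  have e2 : Epos (fun y => - m [set y]) = 0%E.
    by apply: esum1 => y _; rewrite ms0 oppr0 /pp lexx.
  by rewrite e1 e2 subr0.
rewrite /F Sm subr0 => /eqP; rewrite mulf_eq0 => /orP[] /eqP //.
Qed.
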